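(* Let $k\in\mathbb{N}$ and $B\in\mathsf{PSD}_d^k$. Then the matrix $M_{k-1}(B)$ is positive semidefinite.
   Context: For $v\in\mathbb{C}^d$, $\sigma(v)$ is the number of nonzero coordinates. $\mathsf{PSD}_d^k$ is the set of matrices $\sum_{n\in I}|v_n\rangle\langle v_n|$ for finite families $v_n\in\mathbb{C}^d$ with $\sigma(v_n)\le k$. For $B\in\mathcal{M}_d(\mathbb{C})$ and $m\ge 0$, $M_m(B)$ is the matrix with $M_m(B)_{ii}=m|B_{ii}|$ and $M_m(B)_{ij}=-|B_{ij}|$ for $i\ne j$. *)

(* Defs.v *)
From HB Require Import structures.
From mathcomp Require Import all_boot all_order all_algebra.
Set Implicit Arguments. Unset Strict Implicit. Unset Printing Implicit Defensive.
Import Order.TTheory GRing.Theory Num.Theory.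
Local Open Scope ring_scope.

(* Scalars: C : numClosedFieldType (the complex numbers are an instance;
   conjugation is Num.conj). *)

Definition adjmx (C : numClosedFieldType) m n (A : 'M[C]_(m, n)) : 'M[C]_(n, m) :=
  (map_mx Num.conj A)^T.

Definition sigma (C : numClosedFieldType) d (v : 'cV[C]_d) : nat :=
  #|[set i : 'I_d | v i 0 != 0]|.

Definition ketbra (C : numClosedFieldType) d (v : 'cV[C]_d) : 'M[C]_d :=
  v *m adjmx v.

Definition PSDk (C : numClosedFieldType) (d k : nat) (B : 'M[C]_d) : Prop :=
  exists (N : nat) (v : 'I_N -> 'cV[C]_d),
    (forall n, (sigma (v n) <= k)%N) /\ B = \sum_(n < N) ketbra (v n).

Definition Mm (C : numClosedFieldType) d (m : C) (B : 'M[C]_d) : 'M[C]_d :=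
  \matrix_(i, j) (if i == j then m * `|B i i| else - `|B i j|).

Definition psd (C : numClosedFieldType) d (A : 'M[C]_d) : Prop :=
  adjmx A = A /\ forall x : 'cV[C]_d, 0 <= (adjmx x *m A *m x) 0 0.

(* Main.v *)
Require Import Defs.
From mathcomp Require Import all_boot all_order all_algebra ring.
Import Order.TTheory GRing.Theory Num.Theory.
Local Open Scope ring_scope.

Lemma cs_set (C : numClosedFieldType) (I : finType) (S : {set I}) (a : I -> C) :
  (forall i, 0 <= a i) -> (forall i, i \notin S -> a i = 0) ->
  (\sum_i a i) ^+ 2 <= #|S|%:R * \sum_i a i ^+ 2.
Proof.
move=> a0 aS.
have ->: \sum_i a i = \sum_(i in S) a i.
  rewrite (bigID (mem S)) /= [X in _ + X]big1 ?addr0 // => i /aS ->; done.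
have ->: \sum_i a i ^+ 2 = \sum_(i in S) a i ^+ 2.
  rewrite (bigID (mem S)) /= [X in _ + X]big1 ?addr0 // => i /aS ->.
  by rewrite expr0n.
set P := \sum_(i in S) a i; set Q := \sum_(i in S) a i ^+ 2; set n : C := #|S|%:R.
have H : 0 <= \sum_(i in S) \sum_(j in S) (a i - a j) ^+ 2.
  apply: sumr_ge0 => i _; apply: sumr_ge0 => j _.
  by rewrite -realEsqr rpredB // ger0_real.
have E1 : forall i, \sum_(j in S) (a i - a j) ^+ 2 = n * a i ^+ 2 + Q - 2 * a i * P.
  move=> i.
  rewrite (eq_bigr (fun j => a i ^+ 2 + a j ^+ 2 - 2 * a i * a j)); last by move=> j _; ring.
  by rewrite sumrB big_split /= sumr_const -[a i ^+ 2 *+ _]mulr_natl -mulr_sumr.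
have E2 : \sum_(i in S) \sum_(j in S) (a i - a j) ^+ 2 = 2 * (n * Q - P ^+ 2).
  under eq_bigr => k _ do rewrite E1.
  rewrite sumrB big_split /= sumr_const -[Q *+ _]mulr_natl -mulr_sumr.
  rewrite -(mulr_suml _ _ (fun i => 2 * a i)) -mulr_sumr -/n -/Q -/P; ring.
rewrite E2 in H.
by rewrite -subr_ge0 -(pmulr_rge0 _ (ltr0Sn _ 1)).
Qed.

Lemma ketbraE (C : numClosedFieldType) d (v : 'cV[C]_d) i j :
  ketbra v i j = v i 0 * (v j 0)^*.
Proof. by rewrite /ketbra /adjmx !mxE big_ord1 !mxE. Qed.

Lemma quadE (C : numClosedFieldType) d (A : 'M[C]_d) (x : 'cV[C]_d) :
  (adjmx x *m A *m x) 0 0 = \sum_i \sum_j (x i 0)^* * A i j * x j 0.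
Proof.
rewrite mxE exchange_big /=; apply: eq_bigr => i _.
rewrite mxE big_distrl /=; apply: eq_bigr => j _.
by rewrite /adjmx !mxE.
Qed.

Theorem proposition3p11 (C : numClosedFieldType) (d k : nat) (B : 'M[C]_d) :
  PSDk k B -> psd (Mm (k%:R - 1) B).
Proof.
move=> [N [v [Hs ->]]].
set B0 := \sum_(n < N) ketbra (v n).
have BE i j : B0 i j = \sum_(n < N) v n i 0 * (v n j 0)^*.
  by rewrite /B0 summxE; apply: eq_bigr => n _; rewrite ketbraE.
have Bconj i j : B0 j i = (B0 i j)^*.
  rewrite !BE rmorph_sum; apply: eq_bigr => n _.
  by rewrite rmorphM /= conjCK mulrC.
have Bnorm i j : `|B0 i j| = `|B0 j i|.
  by rewrite Bconj norm_conjC.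
have Bii i : `|B0 i i| = \sum_(n < N) `|v n i 0| ^+ 2.
  rewrite BE ger0_norm; first by apply: eq_bigr => n _; rewrite normCK.
  by apply: sumr_ge0 => n _; rewrite -normCK exprn_ge0.
have Bij i j : `|B0 i j| <= \sum_(n < N) `|v n i 0| * `|v n j 0|.
  rewrite BE; apply: le_trans (ler_norm_sum _ _ _) _.
  by apply: ler_sum => n _; rewrite normrM norm_conjC.
have kreal : (k%:R - 1 : C) \is Num.real by rewrite rpredB ?realn ?real1.
split.
  apply/matrixP => i j; rewrite /adjmx /Mm !mxE eq_sym.
  case: eqP => [->|_].
    by rewrite conj_Creal // rpredM ?normr_real.
  by rewrite rmorphN /= conj_Creal ?normr_real // Bnorm.
move=> x; rewrite quadE.
set y := fun i => `|x i 0|.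
set O := \sum_i \sum_j (x i 0)^* * `|B0 i j| * x j 0.
set D0 := \sum_i `|B0 i i| * y i ^+ 2.
have QE : \sum_i \sum_j (x i 0)^* * Mm (k%:R - 1) B0 i j * x j 0 = k%:R * D0 - O.
  rewrite /O /D0 mulr_sumr -sumrB; apply: eq_bigr => i _.
  rewrite (eq_bigr (fun j => (if j == i then (x i 0)^* * (k%:R * `|B0 i i|) * x i 0 else 0)
     - (x i 0)^* * `|B0 i j| * x j 0)); last first.
    move=> j _; rewrite /Mm mxE eq_sym; case: eqP => [->|_]; first ring.
    ring.
  rewrite sumrB -big_mkcond big_pred1_eq /y normCKC; ring.
rewrite QE subr_ge0.
have Oreal : O \is Num.real.
  rewrite CrealE /O rmorph_sum; apply/eqP; rewrite exchange_big /=.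
  apply: eq_bigr => j _; rewrite rmorph_sum; apply: eq_bigr => i _.
  by rewrite !rmorphM /= conjCK conj_Creal ?normr_real // Bnorm; ring.
apply: le_trans (real_ler_norm Oreal) _.
have y0 i : 0 <= y i by rewrite /y normr_ge0.
have T1 : `|O| <= \sum_i \sum_j y i * (\sum_(n < N) `|v n i 0| * `|v n j 0|) * y j.
  apply: le_trans (ler_norm_sum _ _ _) _; apply: ler_sum => i _.
  apply: le_trans (ler_norm_sum _ _ _) _; apply: ler_sum => j _.
  rewrite !normrM norm_conjC normr_id.
  by apply: ler_wpM2r => //; apply: ler_wpM2l.
apply: le_trans T1 _.
have E3 : \sum_i \sum_j y i * (\sum_(n < N) `|v n i 0| * `|v n j 0|) * y j
   = \sum_(n < N) (\sum_i `|v n i 0| * y i) ^+ 2.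
  transitivity (\sum_i \sum_j \sum_(n < N) (`|v n i 0| * y i) * (`|v n j 0| * y j)).
    apply: eq_bigr => i _; apply: eq_bigr => j _.
    rewrite mulr_sumr mulr_suml; apply: eq_bigr => n _; ring.
  rewrite exchange_big /=; under eq_bigr => j _ do rewrite exchange_big /=.
  rewrite exchange_big /=; apply: eq_bigr => n _.
  rewrite expr2 big_distrl /=; apply: eq_bigr => i _.
  by rewrite mulr_sumr; apply: eq_bigr => j _; rewrite mulrC.
rewrite E3.
have E4 : k%:R * D0 = \sum_(n < N) k%:R * \sum_i (`|v n i 0| * y i) ^+ 2.
  rewrite -mulr_sumr /D0 exchange_big /=; congr (_ * _); apply: eq_bigr => i _.
  by rewrite Bii mulr_suml; apply: eq_bigr => n _; rewrite exprMn.
rewrite E4; apply: ler_sum => n _.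
apply: le_trans (@cs_set _ _ [set i | v n i 0 != 0] _ _ _) _.
- by move=> i; rewrite mulr_ge0.
- by move=> i; rewrite inE negbK => /eqP ->; rewrite normr0 mul0r.
apply: ler_wpM2r; first by apply: sumr_ge0 => i _; rewrite exprn_ge0 ?mulr_ge0.
by rewrite ler_nat; apply: Hs.
Qed.
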